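(* Let $\mathcal{L}\subset\mathbb{S}^n$ be a regular linear subspace. The following two conditions are equivalent: (a) there exists a non-zero $K\in\mathcal{L}$ such that $\mathcal{L}\subseteq(\{K\}^\perp)^{-1}$; (b) there exists a non-zero $K\in\mathcal{L}$ such that $\det(P+tK)=\det(P)$ for all $P\in\mathcal{L}$ and all $t\in\mathbb{C}$.
   Context: $\mathbb{S}^n$ denotes the space of complex symmetric $n\times n$ matrices. A linear subspace $\mathcal{L}$ is regular if it contains a full-rank matrix. For a linear subspace $\mathcal{M}\subseteq\mathbb{S}^n$, $\mathcal{M}^{-1}$ denotes its reciprocal variety, the Zariski closure of the set of inverses of invertible matrices in $\mathcal{M}$. $\{K\}^\perp=\{\Sigma\in\mathbb{S}^n:\mathrm{tr}(K\Sigma)=0\}$. *)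

(* Defs.v *)
From HB Require Import structures.
From mathcomp Require Import all_boot all_order all_algebra.
From mathcomp Require Import complex.
From mathcomp Require Import Rstruct.
From mathcomp Require mpoly.
Set Implicit Arguments. Unset Strict Implicit. Unset Printing Implicit Defensive.
Import Order.TTheory GRing.Theory Num.Theory.
Local Open Scope ring_scope.

Definition CC : numClosedFieldType := (Rdefinitions.R)[i]%C.

Definition mxcoords n (A : 'M[CC]_n) : 'I_(n * n) -> CC := fun k => mxvec A 0 k.

Definition zariski_closure n (S : 'M[CC]_n -> Prop) : 'M[CC]_n -> Prop :=
  fun X => forall p : mpoly.mpoly (n * n) CC,
    (forall Y, S Y -> mpoly.meval (mxcoords Y) p = 0) ->
    mpoly.meval (mxcoords X) p = 0.

Definition symmetric_mx n (A : 'M[CC]_n) : Prop := A^T = A.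

Definition sym_perp n (K : 'M[CC]_n) : 'M[CC]_n -> Prop :=
  fun S => symmetric_mx S /\ \tr (K *m S) = 0.

Definition reciprocal_variety n (M : 'M[CC]_n -> Prop) : 'M[CC]_n -> Prop :=
  zariski_closure (fun X => exists2 S, M S & S \in unitmx /\ X = invmx S).

(* Main.v *)
Require Import Defs.
From HB Require Import structures.
From mathcomp Require Import all_boot all_order all_algebra.
Local Open Scope ring_scope.
From mathcomp Require Import mpoly.
Set Implicit Arguments. Unset Strict Implicit. Unset Printing Implicit Defensive.
Import Order.TTheory GRing.Theory Num.Theory.
Set Implicit Arguments. Unset Strict Implicit. Unset Printing Implicit Defensive.
Import Order.TTheory GRing.Theory Num.Theory.
Local Open Scope ring_scope.

Lemma deriv_prod (R : comNzRingType) n (F : 'I_n -> {poly R}) :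
  (\prod_(i < n) F i)^`() =
  \sum_(i < n) \prod_(j < n) (if j == i then (F j)^`() else F j).
Proof.
elim: n F => [|n IH] F.
  by rewrite big_ord0 big_ord0 -polyC1 derivC.
rewrite big_ord_recr /= derivM (IH (fun i => F (widen_ord (leqnSn n) i))).
rewrite big_ord_recr /= mulr_suml; congr (_ + _).
  apply: eq_bigr => i _; rewrite big_ord_recr /=.
  have -> : (ord_max == widen_ord (leqnSn n) i) = false.
    by apply/negbTE; rewrite neq_ltn /= ltn_ord orbT.
  by congr (_ * _); apply: eq_bigr => j _.
rewrite big_ord_recr /= eqxx; congr (_ * _); apply: eq_bigr => j _.
have -> : (widen_ord (leqnSn n) j == ord_max) = false.
  by apply/negbTE; rewrite neq_ltn /= ltn_ord.
by [].
Qed.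

Lemma deriv_det (R : comNzRingType) n (A : 'M[{poly R}]_n) :
  (\det A)^`() = \sum_(i < n) \det (\matrix_(j, k) if j == i then (A j k)^`() else A j k).
Proof.
rewrite /determinant (big_morph _ (@derivD _) (@deriv0 _)).
under eq_bigr => s _ do rewrite -[(-1) ^+ _](rmorph_sign (@polyC R)) deriv_mulC deriv_prod mulr_sumr.
rewrite exchange_big /=; apply: eq_bigr => i _; apply: eq_bigr => s _.
rewrite rmorph_sign; congr (_ * _); apply: eq_bigr => j _; rewrite mxE.
by case: (j == i).
Qed.

Definition Mline (R : comNzRingType) n (P D : 'M[R]_n) : 'M[{poly R}]_n :=
  \matrix_(i, j) ((P i j)%:P + (D i j)%:P * 'X).

Lemma det_Mline (R : comNzRingType) n (P D : 'M[R]_n) t :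
  (\det (Mline P D)).[t] = \det (P + t *: D).
Proof.
rewrite -horner_evalE -det_map_mx; congr (\det _); apply/matrixP => i j.
by rewrite !mxE /= horner_evalE hornerD hornerC hornerMX hornerC mulrC.
Qed.

Lemma jacobi (R : comNzRingType) n (P D : 'M[R]_n) t :
  (\det (Mline P D))^`().[t] = \tr (D *m \adj (P + t *: D)).
Proof.
rewrite deriv_det -horner_evalE rmorph_sum /mxtrace; apply: eq_bigr => i _.
rewrite -det_map_mx (expand_det_row _ i) mxE; apply: eq_bigr => k _.
rewrite !mxE eqxx /= horner_evalE derivD derivC deriv_mulC derivX mulr1 add0r hornerC.
congr (_ * _); rewrite /cofactor; congr (_ * \det _); apply/matrixP => a b.
rewrite !mxE eq_sym (negbTE (neq_lift _ _)) /= horner_evalE.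
by rewrite hornerD hornerC hornerMX hornerC mulrC.
Qed.

Lemma poly_ev0 (p : {poly CC}) : (forall s, p.[s] = 0) -> p = 0.
Proof.
move=> H; apply/eqP; apply: contraT => nz.
have := max_poly_roots nz (rs := [seq (i%:R : CC) | i <- iota 0 (size p)]).
rewrite size_map size_iota ltnn; apply.
  by apply/allP => x /mapP [i _ ->]; apply/rootP; apply: H.
rewrite map_inj_uniq ?iota_uniq //.
by move=> a b /eqP; rewrite eqr_nat => /eqP.
Qed.

Lemma deriv0_const (p : {poly CC}) : p^`() = 0 -> forall t, p.[t] = p.[0].
Proof.
move=> H t; have -> : p = (p`_0)%:P.
  apply/polyP => i; rewrite coefC; case: i => [|i] //=.
  have /eqP := congr1 (fun q : {poly CC} => q`_i) H.
  by rewrite coef_deriv coef0 mulrn_eq0 /= => /eqP.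
by rewrite !hornerC.
Qed.

Lemma const_deriv0 (p : {poly CC}) : (forall t, p.[t] = p.[0]) -> p^`() = 0.
Proof.
move=> H; have -> : p = (p.[0])%:P.
  by apply/eqP; rewrite -subr_eq0; apply/eqP/poly_ev0 => s; rewrite hornerD hornerN hornerC H subrr.
by rewrite derivC.
Qed.

Lemma adj_unit n (A : 'M[CC]_n) : A \in unitmx -> \adj A = \det A *: invmx A.
Proof.
move=> uA; rewrite /invmx uA scalerA mulfV  ?scale1r //.
Qed.

Lemma memL n m (Lb : 'M[CC]_(m, n * n)) (P K : 'M[CC]_n) t :
  (P \in Lb)%MS -> (K \in Lb)%MS -> (P + t *: K \in Lb)%MS.
Proof. by move=> hP hK; rewrite linearD linearZ /= addmx_sub ?scalemx_sub. Qed.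

Lemma key n m (Lb : 'M[CC]_(m, n * n)) (K : 'M[CC]_n) : (K \in Lb)%MS ->
  (forall P, (P \in Lb)%MS -> \tr (K *m \adj P) = 0) <->
  (forall P t, (P \in Lb)%MS -> \det (P + t *: K) = \det P).
Proof.
move=> hK; split.
  move=> H P t hP; rewrite -det_Mline.
  rewrite (@deriv0_const (\det (Mline P K))) ?det_Mline ?scale0r ?addr0 //.
  by apply/poly_ev0 => s; rewrite jacobi; apply: H; apply: memL.
move=> H P hP; have := jacobi P K 0; rewrite scale0r addr0 => <-.
rewrite const_deriv0 ?horner0 // => t.
by rewrite !det_Mline H ?scale0r ?addr0.
Qed.

Definition Xv n : 'M[{mpoly CC[n * n]}]_n := \matrix_(i, j) 'X_(mxvec_index i j).

Lemma meval_tradj n (K Y : 'M[CC]_n) :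
  meval (mxcoords Y) (\tr (map_mx (fun c => c%:MP) K *m \adj (Xv n))) =
  \tr (K *m \adj Y).
Proof.
rewrite -trace_map_mx map_mxM map_mx_adj; congr (\tr (_ *m \adj _)).
  by apply/matrixP => i j; rewrite !mxE; exact: mevalC.
by apply/matrixP => i j; rewrite !mxE; rewrite /= mevalXU /mxcoords mxvecE.
Qed.

Lemma line_poly N (p : {mpoly CC[N]}) (a b : 'I_N -> CC) :
  exists q : {poly CC}, forall s, q.[s] = meval (fun k => a k + s * b k) p.
Proof.
exists (\sum_(mm <- msupp p) (p@_mm)%:P * \prod_i ((a i)%:P + (b i)%:P * 'X) ^+ mm i).
move=> s; rewrite mevalE -horner_evalE rmorph_sum; apply: eq_bigr => mm _.
rewrite rmorphM rmorph_prod /= horner_evalE hornerC; apply: congr1.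
apply: eq_bigr => i _; rewrite rmorphXn /= horner_evalE.
by rewrite hornerD hornerC hornerMX hornerC mulrC.
Qed.

Theorem lemma6p5 (n m : nat) (Lb : 'M[CC]_(m, n * n)) :
  (forall A : 'M[CC]_n, (A \in Lb)%MS -> symmetric_mx A) ->
  (exists2 P : 'M[CC]_n, (P \in Lb)%MS & P \in unitmx) ->
  (exists K : 'M[CC]_n, [/\ (K \in Lb)%MS, K != 0 &
     forall P : 'M[CC]_n, (P \in Lb)%MS -> reciprocal_variety (sym_perp K) P])
  <->
  (exists K : 'M[CC]_n, [/\ (K \in Lb)%MS, K != 0 &
     forall (P : 'M[CC]_n) (t : CC), (P \in Lb)%MS -> \det (P + t *: K) = \det P]).
Proof.
move=> hsym [P0 hP0 uP0]; split.
  case=> K [hK nzK H]; exists K; split => //; apply/(key hK) => P hP.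
  rewrite -(meval_tradj K P); apply: (H P hP) => Y [S hS [uS ->]].
  rewrite meval_tradj adj_unit ?unitmx_inv // invmxK -scalemxAr mxtraceZ.
  by rewrite (proj2 hS) mulr0.
case=> K [hK nzK H]; exists K; split => // P hP.
have H2 := proj2 (key hK) H.
move=> p hp.
have inv_in : forall Q, (Q \in Lb)%MS -> Q \in unitmx -> meval (mxcoords Q) p = 0.
  move=> Q hQ uQ; apply: hp; exists (invmx Q); last by rewrite unitmx_inv invmxK.
  split; first by rewrite /symmetric_mx trmx_inv hsym.
  have := H2 Q hQ; rewrite adj_unit // -scalemxAr mxtraceZ => /eqP.
  rewrite mulf_eq0 => /orP [/eqP d0|/eqP //].
  by move: uQ; rewrite unitmxE unitfE d0 eqxx.
pose D := P0 - P.
have hD : (D \in Lb)%MS by rewrite /D -scaleN1r memL.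
have DE : P + 1 *: D = P0 by rewrite scale1r /D addrC subrK.
clearbody D.
have [q hq] := line_poly p (mxcoords P) (mxcoords D).
have hq' : forall s, q.[s] = meval (mxcoords (P + s *: D)) p.
  move=> s; rewrite hq; apply: meval_eq => k.
  by rewrite /mxcoords linearD linearZ /= !mxE.
pose c := \det (Mline P D).
have cnz : c != 0.
  apply/eqP => c0; have := det_Mline P D 1.
  rewrite -/c c0 horner0 DE => d0.
  by move: uP0; rewrite unitmxE unitfE -d0 eqxx.
have : q * c = 0.
  apply: poly_ev0 => s; rewrite hornerM; case: (boolP (P + s *: D \in unitmx)) => u.
    by rewrite hq' inv_in ?mul0r //; apply: memL.
  by rewrite /c det_Mline; move: u; rewrite unitmxE unitfE negbK => /eqP ->; rewrite mulr0.
move/eqP; rewrite mulf_eq0 (negbTE cnz) orbF => /eqP q0.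
by have := hq' 0; rewrite q0 horner0 scale0r addr0 => <-.
Qed.
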